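(* Let $p\colon E\to B$ be an arc-covering. Then the following are equivalent: (a) $p$ is an arc-hedgehog covering; (b) for every $e_0\in E$ and every open subset $U$ of $E$ containing $e_0$, there is a neighborhood $V$ of $b_0=p(e_0)$ in $B$ such that the path component of $p^{-1}(V)$ containing $e_0$ is a subset of $U$.
   Context: All maps are continuous. A Peano space is a connected, locally path-connected space. For a class $\mathcal{P}$ of spaces, a map $p\colon E\to B$ is a $\mathcal{P}$-covering if for every $e_0\in E$, every $X\in\mathcal{P}$, every $x_0\in X$ and every map $f\colon X\to B$ with $f(x_0)=p(e_0)$ there is a map $g\colon X\to E$ with $p\circ g=f$ and $g(x_0)=e_0$, and such lifts are unique ($g=h$ whenever $g,h\colon X\to E$, $p\circ g=p\circ h$ and $g(x_0)=h(x_0)$ for some $x_0\in X$). An arc-covering is a $\mathcal{P}$-covering for $\mathcal{P}=\{[0,1]\}$. A directed wedge is the wedge $(Z,z_0)=\bigvee_{s\in S}(Z_s,z_s)$ of pointed Peano spaces indexed by a directed set $S$, with the topology: $U\subset Z\setminus\{z_0\}$ is open iff $U\cap Z_s$ is open in $Z_s$ for every $s$; a set $U\ni z_0$ is an open neighborhood of $z_0$ iff $U\cap Z_s$ is open in $Z_s$ for every $s$ and there is $t\in S$ with $Z_s\subset U$ for all $s>t$. An arc-hedgehog is a directed wedge in which each $(Z_s,z_s)$ is homeomorphic to $([0,1],0)$. An arc-hedgehog covering is a $\mathcal{P}$-covering where $\mathcal{P}$ is the class of all arc-hedgehogs. *)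

(* Defs.v *)
From HB Require Import structures.
From mathcomp Require Import all_boot all_order all_algebra.
From mathcomp Require Import all_classical all_reals topology.
From mathcomp Require Import Rstruct Rstruct_topology.
From Stdlib Require Import Rdefinitions.

Set Implicit Arguments.
Unset Strict Implicit.
Unset Printing Implicit Defensive.

Import Order.TTheory GRing.Theory Num.Theory.
Local Open Scope classical_set_scope.
Local Open Scope ring_scope.

Definition I01 : topologicalType := set_type (`[0, 1]%classic : set R).

Lemma I01_0_mem : (0 : R) \in (`[0, 1]%classic : set R).
Proof. by apply/mem_set; rewrite /= in_itv /= lexx ler01. Qed.
Lemma I01_1_mem : (1 : R) \in (`[0, 1]%classic : set R).
Proof. by apply/mem_set; rewrite /= in_itv /= lexx ler01. Qed.

Definition i0 : I01 := exist _ (0 : R) I01_0_mem.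
Definition i1 : I01 := exist _ (1 : R) I01_1_mem.

(** Lifting property (existence and uniqueness of lifts) for maps from a
    space X, given abstractly by its carrier and a notion of continuity of maps
    X -> (topological space). *)
Definition lifting_property (X : Type)
    (cont : forall T : topologicalType, (X -> T) -> Prop)
    (E B : topologicalType) (p : E -> B) : Prop :=
  (forall (e0 : E) (x0 : X) (f : X -> B), cont B f -> f x0 = p e0 ->
     exists g : X -> E, [/\ cont E g, p \o g = f & g x0 = e0])
  /\
  (forall (g h : X -> E), cont E g -> cont E h -> p \o g = p \o h ->
     (exists x0 : X, g x0 = h x0) -> g = h).

(** Arc-covering: P-covering for P = {[0,1]}. *)
Definition arc_covering (E B : topologicalType) (p : E -> B) : Prop :=
  lifting_property (fun (T : topologicalType) (f : I01 -> T) => continuous f) p.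

Definition directed (S : Type) (le : S -> S -> Prop) : Prop :=
  [/\ inhabited S, (forall a, le a a),
      (forall a b c, le a b -> le b c -> le a c) &
      (forall a b, exists c, le a c /\ le b c)].

Definition dlt (S : Type) (le : S -> S -> Prop) (t s : S) : Prop :=
  le t s /\ ~ le s t.

(** Carrier of the arc-hedgehog (directed wedge of copies of ([0,1],0)):
    [None] is the wedge point z0, [Some (s, t)] is the point t in ]0,1] of the
    s-th arc. *)
Definition hedgehog (S : Type) : Type := option (S * set_type (`]0, 1]%classic : set R)).

Definition hh_pt (S : Type) (s : S) (t : I01) : hedgehog S :=
  omap (fun u => (s, u)) (insub (sval t) : option (set_type (`]0, 1]%classic : set R))).

Definition hh_open (S : Type) (le : S -> S -> Prop) (U : set (hedgehog S)) : Prop :=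
  (forall s : S, open [set t : I01 | U (hh_pt s t)]) /\
  (U None -> exists t : S, forall s : S, dlt le t s -> forall x : I01, U (hh_pt s x)).

Definition hh_continuous (S : Type) (le : S -> S -> Prop) (T : topologicalType)
    (f : hedgehog S -> T) : Prop :=
  forall V : set T, open V -> hh_open le (f @^-1` V).

(** Arc-hedgehog covering: P-covering for P = all arc-hedgehogs. *)
Definition arc_hedgehog_covering (E B : topologicalType) (p : E -> B) : Prop :=
  forall (S : Type) (le : S -> S -> Prop), directed le ->
    lifting_property (hh_continuous le) p.

(** The path component of A containing e0 (empty if e0 is not in A). *)
Definition path_component (E : topologicalType) (A : set E) (e0 : E) : set E :=
  [set e | exists gamma : I01 -> E,
     [/\ continuous gamma, gamma i0 = e0, gamma i1 = e &
         forall t, A (gamma t)]].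

(* Main.v *)
Require Import Defs.
From mathcomp Require Import all_boot all_order all_algebra.
From mathcomp Require Import all_classical all_reals topology normedtype.
From mathcomp Require Import Rstruct Rstruct_topology.
From Stdlib Require Import Rdefinitions.
Import Order.TTheory GRing.Theory Num.Theory.
Local Open Scope classical_set_scope.
Local Open Scope ring_scope.
Set Implicit Arguments.
Unset Strict Implicit.

Lemma in01 (x : R) : (x \in (`[0, 1]%classic : set R)) = (0 <= x <= 1).
Proof. apply/idP/idP.
- by move/set_mem; rewrite /= in_itv.
- by move=> h; apply/mem_set; rewrite /= in_itv.
Qed.
Lemma in01o (x : R) : (x \in (`]0, 1]%classic : set R)) = (0 < x <= 1).
Proof. apply/idP/idP.
- by move/set_mem; rewrite /= in_itv.
- by move=> h; apply/mem_set; rewrite /= in_itv.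
Qed.

Lemma mulI_mem (t x : I01) : sval t * sval x \in (`[0, 1]%classic : set R).
Proof.
case: t => t /=; case: x => x /=; rewrite !in01 => /andP[t0 t1] /andP[x0 x1].
rewrite mulr_ge0 //=. by rewrite mulr_ile1.
Qed.

Definition mulI (x : I01) (t : I01) : I01 := exist (fun r : R => r \in (`[0, 1]%classic : set R)) _ (mulI_mem t x).

Lemma mulI_cont (x : I01) : continuous (mulI x).
Proof.
apply: continuous_comp_initial.
have -> : (set_val \o mulI x) = (fun r : R => r * sval x) \o (set_val : I01 -> R) by [].
move=> t; apply: continuous_comp; first exact: initial_continuous.
exact: mulrr_continuous.
Qed.

Lemma mulI0 x : mulI x i0 = i0.
Proof. by apply: val_inj; rewrite /= mul0r. Qed.
Lemma mulI1 x : mulI x i1 = x.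
Proof. by apply: val_inj; rewrite /= mul1r. Qed.

Lemma toI_mem (u : set_type (`]0, 1]%classic : set R)) : sval u \in (`[0, 1]%classic : set R).
Proof. case: u => u /=; rewrite in01 in01o => /andP[u0 u1]; by rewrite ltW. Qed.
Definition toI (u : set_type (`]0, 1]%classic : set R)) : I01 :=
  exist (fun r : R => r \in (`[0, 1]%classic : set R)) _ (toI_mem u).

Section HH.
Variable S : Type.

Lemma hh_pt0 (s : S) : hh_pt s i0 = None.
Proof. by rewrite /hh_pt /= insubF //= in01o ltxx. Qed.

Lemma hh_pt_toI (s : S) u : hh_pt s (toI u) = Some (s, u).
Proof.
rewrite /hh_pt; case: insubP => [v _ hv | hn] /=.
  by congr (Some (_, _)); apply: val_inj; rewrite hv.
by case: u hn => u /= hu; rewrite hu.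
Qed.

Definition hglue (T : Type) (c : T) (g : S -> I01 -> T) (z : hedgehog S) : T :=
  match z with None => c | Some (s, u) => g s (toI u) end.

Lemma hglue_pt (T : Type) (c : T) (g : S -> I01 -> T) :
  (forall s, g s i0 = c) -> forall s t, hglue c g (hh_pt s t) = g s t.
Proof.
move=> g0 s t; rewrite /hh_pt; case: insubP => [u _ hu | hn] /=.
  by congr (g s _); apply: val_inj; rewrite /= hu.
have -> : t = i0; last by rewrite g0.
apply: val_inj => /=; case: t hn => v pv /= hn; move: pv hn.
rewrite in01o in01 => /andP[v0 v1].
by rewrite v1 andbT -leNgt => hv; apply/eqP; rewrite eq_le hv v0.
Qed.

Lemma hh_cont_pt (le : S -> S -> Prop) (T : topologicalType) (f : hedgehog S -> T) :
  hh_continuous le f -> forall s, continuous (f \o hh_pt s).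
Proof. by move=> hf s; apply/continuousP => V oV; exact: (hf V oV).1 s. Qed.

Lemma hglue_open1 (T : topologicalType) (c : T) (g : S -> I01 -> T) :
  (forall s, g s i0 = c) -> (forall s, continuous (g s)) ->
  forall V : set T, open V -> forall s, open [set t : I01 | V (hglue c g (hh_pt s t))].
Proof.
move=> g0 gc V oV s.
have -> : [set t : I01 | V (hglue c g (hh_pt s t))] = g s @^-1` V.
  by apply/seteqP; split => t /=; rewrite hglue_pt.
by move/continuousP: (gc s); apply.
Qed.

End HH.
Arguments hh_cont_pt [S le T f] _ s.


Section Main.
Variables (E B : topologicalType) (p : E -> B).

Lemma hh_unique (S : Type) (le : S -> S -> Prop) : arc_covering p ->
  forall g h : hedgehog S -> E, hh_continuous le g -> hh_continuous le h ->
  p \o g = p \o h -> (exists x0, g x0 = h x0) -> g = h.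
Proof.
move=> [_ uniq] g h gc hc pgh [x0 gh0].
have arc s t : g (hh_pt s t) = h (hh_pt s t) -> g \o hh_pt s = h \o hh_pt s.
  move=> e; apply: uniq; [exact: (hh_cont_pt gc s) | exact: (hh_cont_pt hc s) | | by exists t].
  by apply: funext => y; exact: (congr1 (fun F => F (hh_pt s y)) pgh).
have gN : g None = h None.
  case: x0 gh0 => [[s u]|] // e.
  have := congr1 (fun F => F i0) (arc s (toI u) ltac:(by rewrite hh_pt_toI)).
  by rewrite /= hh_pt0.
apply: funext => -[[s u]|] //.
have := congr1 (fun F => F (toI u)) (arc s i0 ltac:(by rewrite hh_pt0)).
by rewrite /= hh_pt_toI.
Qed.

Definition PropB := forall (e0 : E) (U : set E), open U -> U e0 ->
      exists V : set B, nbhs (p e0) V /\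
        path_component (p @^-1` V) e0 `<=` U.

Lemma hh_exist0 (S : Type) (le : S -> S -> Prop) : arc_covering p -> PropB ->
  forall e1 f, hh_continuous le f -> f None = p e1 ->
  exists g, [/\ hh_continuous le g, p \o g = f & g None = e1].
Proof.
move=> arc PB e1 f hf fN.
have X : forall s, {gam : I01 -> E | [/\ continuous gam, p \o gam = f \o hh_pt s & gam i0 = e1]}.
  move=> s; apply: cid.
  exact: (arc.1 e1 i0 (f \o hh_pt s) (hh_cont_pt hf s) ltac:(by rewrite /= hh_pt0)).
pose gam s := sval (X s).
have gc s : continuous (gam s) by case: (svalP (X s)).
have gp s : p \o gam s = f \o hh_pt s by case: (svalP (X s)).
have g0 s : gam s i0 = e1 by case: (svalP (X s)).
exists (hglue e1 gam); split => //.
- move=> W oW; split; first exact: hglue_open1.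
  move=> /= We1.
  have [V [nV pcV]] := PB e1 W oW We1.
  move: nV; rewrite nbhsE => -[V' [oV' V'p] sV].
  have [t ht] := (hf V' oV').2 ltac:(by rewrite /= fN).
  exists t => s hs x; rewrite /= hglue_pt //; apply: pcV.
  exists (gam s \o mulI x); split.
  + by move=> y; apply: continuous_comp; [exact: mulI_cont | exact: gc].
  + by rewrite /= mulI0 g0.
  + by rewrite /= mulI1.
  + move=> y /=; apply: sV.
    have -> : p (gam s (mulI x y)) = f (hh_pt s (mulI x y)).
      exact: (congr1 (fun F => F (mulI x y)) (gp s)).
    exact: ht.
- apply: funext => -[[s u]|] /=; last by rewrite fN.
  by rewrite -(hh_pt_toI s u); exact: (congr1 (fun F => F (toI u)) (gp s)).
Qed.

Lemma b_to_a : arc_covering p -> PropB -> arc_hedgehog_covering p.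
Proof.
move=> arc PB S le _; split; last exact: hh_unique.
move=> e0 x0 f hf fx0; case: x0 fx0 => [[s u]|] fx0; last exact: hh_exist0.
have [gam [gc gp gu]] := arc.1 e0 (toI u) (f \o hh_pt s) (hh_cont_pt hf s)
  ltac:(by rewrite /= hh_pt_toI).
have fN : f None = p (gam i0).
  by rewrite -(hh_pt0 s); exact: (congr1 (fun F => F i0) (esym gp)).
have [g [gcg pg gN]] := hh_exist0 arc PB hf fN.
exists g; split => //.
have e : g \o hh_pt s = gam.
  apply: arc.2; [exact: (hh_cont_pt gcg s) | exact: gc | | by exists i0; rewrite /= hh_pt0].
  apply: funext => y; rewrite /= -[p (gam y)]/((p \o gam) y) gp.
  exact: (congr1 (fun F => F (hh_pt s y)) pg).
by rewrite -(hh_pt_toI s u) -gu -e.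
Qed.


Lemma a_to_b : continuous p -> arc_covering p -> arc_hedgehog_covering p -> PropB.
Proof.
move=> pc arc hh e0 U oU Ue0.
apply: contrapT => hneg.
have key : forall V : {V : set B | nbhs (p e0) V},
    {gam : I01 -> E | [/\ continuous gam, gam i0 = e0,
       (forall t, sval V (p (gam t))) & ~ U (gam i1)]}.
  move=> [V nV]; apply: cid => /=.
  apply: contrapT => hn; apply: hneg; exists V; split => // e [gam [g1 g2 g3 g4]].
  apply: contrapT => nU; apply: hn; exists gam; split => //; by rewrite g3.
pose S := ({V : set B | nbhs (p e0) V} * nat)%type.
pose le (a b : S) := sval b.1 `<=` sval a.1 /\ leq a.2 b.2.
have dirS : directed le.
  split.
  - by constructor; exact: (exist _ setT filterT, 0%N).
  - by move=> a; split.
  - move=> a b c [h1 h2] [h3 h4]; split; first by move=> x /h3 /h1.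
    exact: leq_trans h4.
  - move=> [[V nV] n] [[W nW] m].
    exists (exist _ (V `&` W) (filterI nV nW), maxn n m).
    by split; split => /=; [move=> x [] | exact: leq_maxl | move=> x [] | exact: leq_maxr].
pose gamS (s : S) := sval (key s.1).
have gc s : continuous (gamS s) by case: (svalP (key s.1)).
have g0 s : gamS s i0 = e0 by case: (svalP (key s.1)).
have gV s t : sval s.1 (p (gamS s t)) by case: (svalP (key s.1)) => _ _ h _; exact: h.
have gU s : ~ U (gamS s i1) by case: (svalP (key s.1)).
pose f := hglue (p e0) (fun s => p \o gamS s).
have f0 s : (p \o gamS s) i0 = p e0 by rewrite /= g0.
have hf : hh_continuous le f.
  move=> W oW; split.
    apply: hglue_open1 => // s y; apply: continuous_comp; [exact: gc | exact: pc].
  move=> /= We0.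
  have nW : nbhs (p e0) W by apply: open_nbhs_nbhs; split.
  exists (exist _ W nW, 0%N) => s [[hsW _] _] x.
  by rewrite /= /f hglue_pt //=; apply: hsW; exact: gV.
have [g [gcg pg gN]] := (hh S le dirS).1 e0 None f hf erefl.
have [t ht] := (gcg U oU).2 ltac:(by rewrite /= gN).
pose s : S := (t.1, t.2.+1).
have hs : dlt le t s.
  split; first by split => //=; exact: leqnSn.
  by case=> _ /=; rewrite ltnn.
have := ht s hs i1.
have e : g \o hh_pt s = gamS s.
  apply: arc.2; [exact: (hh_cont_pt gcg s) | exact: gc | | by exists i0; rewrite /= hh_pt0 gN g0].
  apply: funext => y /=.
  have := congr1 (fun F => F (hh_pt s y)) pg; rewrite /= => ->.
  by rewrite /f hglue_pt.
have := congr1 (fun F => F i1) e; rewrite /= => -> /gU; done.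
Qed.

End Main.

Theorem theorem3p5 (E B : topologicalType) (p : E -> B) :
  continuous p -> arc_covering p ->
  (arc_hedgehog_covering p <->
   (forall (e0 : E) (U : set E), open U -> U e0 ->
      exists V : set B, nbhs (p e0) V /\
        path_component (p @^-1` V) e0 `<=` U)).
Proof.
move=> pc arc; split; first exact: a_to_b.
exact: b_to_a.
Qed.
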